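(* Let $\lambda\geqslant\omega$ be a cardinal and $n$ a positive integer, and let $\mathscr{I}_\lambda^n$ carry any Hausdorff topology making it a topological semigroup. Then every continuous homomorphism from $\mathscr{I}_\lambda^n$ into a compact (Hausdorff) topological semigroup is annihilating (constant).
   Context: A topological semigroup is a Hausdorff space with a continuous associative multiplication. For a set $X$ of cardinality $\lambda$, $\mathscr{I}(X)$ is the semigroup of all partial one-to-one maps of $X$ (including the empty map) under composition; the rank of $\alpha$ is $|\operatorname{ran}\alpha|$, and $\mathscr{I}_\lambda^n=\{\alpha\in\mathscr{I}(X):\operatorname{rank}\alpha\leqslant n\}$. A homomorphism is annihilating if it is constant. *)

(* Defs.v *)
From Stdlib Require Import List Arith.
Import ListNotations.
Set Implicit Arguments.

Record topology (T : Type) := Topology {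
  is_open : (T -> Prop) -> Prop;
  open_full : is_open (fun _ => True);
  open_inter : forall U V, is_open U -> is_open V ->
                 is_open (fun x => U x /\ V x);
  open_union : forall F : (T -> Prop) -> Prop,
                 (forall U, F U -> is_open U) ->
                 is_open (fun x => exists U, F U /\ U x)
}.

Definition hausdorff (T : Type) (tau : topology T) : Prop :=
  forall x y : T, x <> y ->
    exists U V, is_open tau U /\ is_open tau V /\ U x /\ V y /\
                (forall z, U z -> V z -> False).

Definition compact (T : Type) (tau : topology T) : Prop :=
  forall F : (T -> Prop) -> Prop,
    (forall U, F U -> is_open tau U) ->
    (forall x, exists U, F U /\ U x) ->
    exists l : list (T -> Prop),
      (forall U, In U l -> F U) /\ (forall x, exists U, In U l /\ U x).

Definition continuous (T1 T2 : Type) (t1 : topology T1) (t2 : topology T2)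
  (f : T1 -> T2) : Prop :=
  forall W, is_open t2 W -> is_open t1 (fun x => W (f x)).

Definition prod_open (T1 T2 : Type) (t1 : topology T1) (t2 : topology T2)
  (W : T1 * T2 -> Prop) : Prop :=
  forall p, W p -> exists U V, is_open t1 U /\ is_open t2 V /\
    U (fst p) /\ V (snd p) /\ (forall q, U (fst q) -> V (snd q) -> W q).

Definition continuous2 (T1 T2 T3 : Type) (t1 : topology T1) (t2 : topology T2)
  (t3 : topology T3) (f : T1 -> T2 -> T3) : Prop :=
  forall W, is_open t3 W -> prod_open t1 t2 (fun p => W (f (fst p) (snd p))).

Definition topological_semigroup (S : Type) (mul : S -> S -> S)
  (tau : topology S) : Prop :=
  hausdorff tau /\
  (forall a b c, mul a (mul b c) = mul (mul a b) c) /\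
  continuous2 tau tau tau mul.

(* partial maps of X, as X -> option X (None = undefined) *)
Definition pinj (X : Type) (a : X -> option X) : Prop :=
  forall x y z, a x = Some z -> a y = Some z -> x = y.

Definition rank_le (X : Type) (n : nat) (a : X -> option X) : Prop :=
  exists l : list X, length l <= n /\ forall x y, a x = Some y -> In y l.

(* composition, acting on the right: x (a b) = (x a) b *)
Definition pcomp (X : Type) (a b : X -> option X) : X -> option X :=
  fun x => match a x with Some y => b y | None => None end.

Definition Iln (X : Type) (n : nat) : Type :=
  { a : X -> option X | pinj a /\ rank_le n a }.

Lemma pcomp_closed (X : Type) (n : nat) (a b : X -> option X) :
  pinj a /\ rank_le n a -> pinj b /\ rank_le n b ->
  pinj (pcomp a b) /\ rank_le n (pcomp a b).
Proof.
  intros [Ia _] [Ib [l [Hl Hr]]]. unfold pcomp. split.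
  - intros x y z Hx Hy.
    destruct (a x) as [u|] eqn:Ex; [|discriminate].
    destruct (a y) as [v|] eqn:Ey; [|discriminate].
    assert (u = v) by (apply (Ib u v z); assumption). subst v.
    apply (Ia x y u); assumption.
  - exists l. split; [exact Hl|].
    intros x y H. destruct (a x) as [u|]; [|discriminate]. exact (Hr u y H).
Qed.

Definition Iln_mul (X : Type) (n : nat) (a b : Iln X n) : Iln X n :=
  exist _ (pcomp (proj1_sig a) (proj1_sig b))
        (pcomp_closed (proj2_sig a) (proj2_sig b)).

(* X has cardinality lambda >= omega, i.e. X is infinite *)
Definition infinite_type (X : Type) : Prop :=
  exists f : nat -> X, forall i j, f i = f j -> i = j.

(* Main.v *)
Require Import Defs.
From Stdlib Require Import List Arith Lia Classical ClassicalEpsilon FunctionalExtensionality ProofIrrelevance.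
Import ListNotations.

Lemma fold1 (S : Type) (sigma : topology S) (p q : nat -> S) (s : S)
  (l : list (S -> Prop)) :
  (forall B, In B l -> is_open sigma B /\ exists A N, is_open sigma A /\ A s /\
      forall j, N <= j -> A (p j) -> B (q j) -> False) ->
  exists A N, is_open sigma A /\ A s /\
      forall j, N <= j -> A (p j) -> (exists B, In B l /\ B (q j)) -> False.
Proof.
  induction l as [|B l IH]; intros H.
  - exists (fun _ => True), 0. split; [apply open_full|]. split; [exact I|].
    intros j _ _ [B [[] _]].
  - destruct (H B (or_introl eq_refl)) as [_ [A1 [N1 [oA1 [A1s H1]]]]].
    destruct IH as [A2 [N2 [oA2 [A2s H2]]]].
    { intros B' HB'. apply H. right. exact HB'. }
    exists (fun x => A1 x /\ A2 x), (Nat.max N1 N2).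
    split; [apply open_inter; assumption|]. split; [split; assumption|].
    intros j Hj [Ha1 Ha2] [B' [[<-|HB'] HB'q]].
    + apply (H1 j); [lia|assumption|assumption].
    + apply (H2 j); [lia|assumption|]. exists B'; split; assumption.
Qed.

Lemma fold2 (S : Type) (sigma : topology S) (p : nat -> S)
  (l : list (S -> Prop)) :
  (forall A, In A l -> exists N, forall j, N <= j -> A (p j) -> False) ->
  exists N, forall j, N <= j -> (exists A, In A l /\ A (p j)) -> False.
Proof.
  induction l as [|A l IH]; intros H.
  - exists 0. intros j _ [A [[] _]].
  - destruct (H A (or_introl eq_refl)) as [N1 H1].
    destruct IH as [N2 H2]. { intros A' HA'. apply H. right. exact HA'. }
    exists (Nat.max N1 N2). intros j Hj [A' [[<-|HA'] Hp]].
    + apply (H1 j); [lia|assumption].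
    + apply (H2 j); [lia|]. exists A'; split; assumption.
Qed.

Lemma accum (S : Type) (sigma : topology S) (HSc : compact sigma) (p q : nat -> S) :
  exists s t, forall A B, is_open sigma A -> is_open sigma B -> A s -> B t ->
    forall N, exists j, N <= j /\ A (p j) /\ B (q j).
Proof.
  apply NNPP; intro H.
  assert (Hb : forall s t, exists A B N, is_open sigma A /\ is_open sigma B /\ A s /\ B t /\
     forall j, N <= j -> A (p j) -> B (q j) -> False).
  { intros s t. apply NNPP; intro H2. apply H. exists s, t.
    intros A B oA oB As Bt N. apply NNPP; intro H3. apply H2.
    exists A, B, N. repeat split; auto.
    intros j Hj Ha Hb'. apply H3. exists j; auto. }
  assert (Hs : forall s, exists A N, is_open sigma A /\ A s /\
      forall j, N <= j -> A (p j) -> False).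
  { intros s.
    destruct (HSc (fun B => is_open sigma B /\ exists A N, is_open sigma A /\ A s /\
      forall j, N <= j -> A (p j) -> B (q j) -> False)) as [l [Hl Hcov]].
    - intros U [HU _]; exact HU.
    - intros t. destruct (Hb s t) as [A [B [N [oA [oB [As [Bt HN]]]]]]].
      exists B. split; [|exact Bt]. split; [exact oB|]. exists A, N. auto.
    - destruct (@fold1 _ sigma p q s l Hl) as [A [N [oA [As HN]]]].
      exists A, N. split; [exact oA|]. split; [exact As|].
      intros j Hj Hp. apply (HN j Hj Hp). apply Hcov. }
  destruct (HSc (fun A => is_open sigma A /\ exists N, forall j, N <= j -> A (p j) -> False))
    as [l [Hl Hcov]].
  - intros U [HU _]; exact HU.
  - intros s. destruct (Hs s) as [A [N [oA [As HN]]]]. exists A. split; [|exact As].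
    split; [exact oA|]. exists N. exact HN.
  - destruct (@fold2 _ sigma p l) as [N HN].
    { intros A HA. apply (Hl A HA). }
    apply (HN N (le_n N)). apply Hcov.
Qed.

Lemma core (S : Type) (mulS : S -> S -> S) (sigma : topology S)
  (HS : topological_semigroup mulS sigma) (HSc : compact sigma)
  (p q : nat -> S) (c d : S)
  (Hc : forall j, mulS (p j) (q j) = c)
  (Hd : forall j k, j <> k -> mulS (p j) (q k) = d) : c = d.
Proof.
  destruct HS as [Hh [_ Hm]].
  destruct (@accum _ sigma HSc p q) as [s [t Hst]].
  assert (Hlim : forall x, (forall U, is_open sigma U -> U (mulS s t) -> U x) -> mulS s t = x).
  { intros x Hx. apply NNPP; intro Hne.
    destruct (Hh _ _ Hne) as [U [V [oU [oV [Us [Vx Hdis]]]]]].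
    exact (Hdis x (Hx U oU Us) Vx). }
  assert (E1 : mulS s t = c).
  { apply Hlim. intros U oU Us.
    destruct (Hm U oU (s, t) Us) as [A [B [oA [oB [As [Bt HAB]]]]]].
    destruct (Hst A B oA oB As Bt 0) as [j [_ [Aj Bj]]].
    rewrite <- (Hc j). exact (HAB (p j, q j) Aj Bj). }
  assert (E2 : mulS s t = d).
  { apply Hlim. intros U oU Us.
    destruct (Hm U oU (s, t) Us) as [A [B [oA [oB [As [Bt HAB]]]]]].
    destruct (Hst A B oA oB As Bt 0) as [j [_ [Aj Bj]]].
    destruct (Hst A B oA oB As Bt (j + 1)) as [k [Hk [Ak Bk]]].
    rewrite <- (Hd j k ltac:(lia)). exact (HAB (p j, q k) Aj Bk). }
  congruence.
Qed.

Definition xdec {X : Type} (x y : X) : {x = y} + {x <> y} :=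
  excluded_middle_informative (x = y).

Fixpoint idx {X : Type} (l : list X) (y : X) : nat :=
  match l with [] => 0 | z :: l' => if xdec z y then 0 else S (idx l' y) end.

Lemma idx_lt {X : Type} (l : list X) y : In y l -> idx l y < length l.
Proof.
  induction l as [|z l IH]; simpl; [tauto|]. intros [H|H];
  destruct (xdec z y); try lia. subst; tauto. specialize (IH H). lia.
Qed.

Lemma idx_inj {X : Type} (l : list X) y y' : In y l -> In y' l -> idx l y = idx l y' -> y = y'.
Proof.
  induction l as [|z l IH]; simpl; [tauto|]. intros Hy Hy'.
  destruct (xdec z y), (xdec z y'); try congruence; try discriminate.
  intros E. injection E. apply IH; [destruct Hy; [congruence|assumption]|destruct Hy'; [congruence|assumption]].
Qed.

Fixpoint srch {X : Type} (g : X -> X) (l : list X) (z : X) : option X :=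
  match l with [] => None | y :: l' => if xdec (g y) z then Some y else srch g l' z end.

Lemma srch_sound {X : Type} (g : X -> X) l z y : srch g l z = Some y -> In y l /\ g y = z.
Proof.
  induction l as [|w l IH]; simpl; [discriminate|].
  destruct (xdec (g w) z); intros H.
  - injection H; intros; subst; auto.
  - destruct (IH H); auto.
Qed.

Lemma srch_complete {X : Type} (g : X -> X) l z y : In y l -> g y = z -> exists y', srch g l z = Some y'.
Proof.
  induction l as [|w l IH]; simpl; [tauto|]. intros Hy Hg.
  destruct (xdec (g w) z); [eauto|]. destruct Hy; [subst; tauto|]. auto.
Qed.

Lemma arith n j k i i' : i < n -> i' < n -> j * n + i = k * n + i' -> j = k.
Proof.
  intros. destruct (lt_eq_lt_dec j k) as [[H2|H2]|H2]; [|assumption|]; exfalso.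
  - assert ((j+1)*n <= k*n) by (apply Nat.mul_le_mono_r; lia). nia.
  - assert ((k+1)*n <= j*n) by (apply Nat.mul_le_mono_r; lia). nia.
Qed.

Lemma Iln_ext (X : Type) (n : nat) (a b : Iln X n) : proj1_sig a = proj1_sig b -> a = b.
Proof.
  destruct a as [a Ha], b as [b Hb]; simpl; intro E; subst. f_equal. apply proof_irrelevance.
Qed.

Definition gg {X : Type} (f : nat -> X) (n : nat) (l : list X) (j : nat) (y : X) : X :=
  f (j * n + idx l y).

Lemma gg_inj {X : Type} (f : nat -> X) (Hf : forall i j, f i = f j -> i = j) n l
  (Hl : length l <= n) j k y y' :
  In y l -> In y' l -> gg f n l j y = gg f n l k y' -> j = k /\ y = y'.
Proof.
  unfold gg; intros Hy Hy' E. apply Hf in E.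
  pose proof (idx_lt l y Hy). pose proof (idx_lt l y' Hy').
  assert (j = k) by (eapply arith; [| |exact E]; lia). subst.
  split; [reflexivity|]. apply (idx_inj l); auto. lia.
Qed.

Definition Um {X : Type} (a : X -> option X) f n l j : X -> option X :=
  fun x => match a x with Some y => Some (gg f n l j y) | None => None end.

Definition Wm {X : Type} f n (l : list X) j : X -> option X := srch (gg f n l j) l.


Lemma decomp (X : Type) (f : nat -> X) (Hf : forall i j, f i = f j -> i = j) (n : nat)
  (a : Iln X n) :
  exists U W : nat -> Iln X n,
    (forall j, Iln_mul (U j) (W j) = a) /\
    (forall j k, j <> k -> proj1_sig (Iln_mul (U j) (W k)) = fun _ => None).
Proof.
  destruct a as [a [Pa [l [Hl Hr]]]].
  assert (HU : forall j, pinj (Um a f n l j) /\ rank_le n (Um a f n l j)).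
  { intro j. split.
    - intros x x' z. unfold Um.
      destruct (a x) as [y|] eqn:Ex; [|discriminate].
      destruct (a x') as [y'|] eqn:Ex'; [|discriminate].
      intros E1 E2. injection E1; injection E2; intros; subst.
      destruct (gg_inj f Hf n l Hl j j y y') as [_ ->]; auto; [eapply Hr; eauto|eapply Hr; eauto|].
      eapply Pa; eauto.
    - exists (map (gg f n l j) l). rewrite length_map. split; [exact Hl|].
      intros x z. unfold Um. destruct (a x) as [y|] eqn:Ex; [|discriminate].
      intro E; injection E; intros; subst. apply in_map. eapply Hr; eauto. }
  assert (HW : forall j, pinj (Wm f n l j) /\ rank_le n (Wm f n l j)).
  { intro j. split.
    - intros z z' y E1 E2. apply srch_sound in E1, E2. destruct E1, E2; congruence.
    - exists l. split; [exact Hl|]. intros z y E. apply srch_sound in E. tauto. }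
  exists (fun j => exist (fun b => pinj b /\ rank_le n b) _ (HU j) : Iln X n), (fun j => exist (fun b => pinj b /\ rank_le n b) _ (HW j) : Iln X n). split.
  - intro j. apply Iln_ext. simpl. apply functional_extensionality. intro x.
    unfold pcomp, Um, Wm. destruct (a x) as [y|] eqn:Ex; [|reflexivity].
    assert (Hy : In y l) by (eapply Hr; eauto).
    destruct (srch_complete (gg f n l j) l (gg f n l j y) y Hy eq_refl) as [y' Hs].
    rewrite Hs. apply srch_sound in Hs. destruct Hs as [Hy' E].
    destruct (gg_inj f Hf n l Hl j j y' y) as [_ ->]; auto.
  - intros j k Hjk. simpl. apply functional_extensionality. intro x.
    unfold pcomp, Um, Wm. destruct (a x) as [y|] eqn:Ex; [|reflexivity].
    destruct (srch (gg f n l k) l (gg f n l j y)) as [y'|] eqn:Hs; [|reflexivity].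
    apply srch_sound in Hs. destruct Hs as [Hy' E].
    destruct (gg_inj f Hf n l Hl k j y' y) as [? _]; auto; [eapply Hr; eauto|congruence].
Qed.

Theorem theorem9 (X : Type) (HX : infinite_type X) (n : nat) (Hn : 1 <= n)
  (tau : topology (Iln X n))
  (Htau : topological_semigroup (@Iln_mul X n) tau)
  (S : Type) (mulS : S -> S -> S) (sigma : topology S)
  (HS : topological_semigroup mulS sigma) (HSc : compact sigma)
  (h : Iln X n -> S)
  (Hhom : forall a b, h (Iln_mul a b) = mulS (h a) (h b))
  (Hcont : continuous tau sigma h) :
  forall a b : Iln X n, h a = h b.
Proof.
  destruct HX as [f Hf].
  assert (Hz : pinj (fun _ : X => @None X) /\ rank_le n (fun _ : X => @None X)).
  { split. - intros x y z E; discriminate. - exists []. split; [simpl; lia|]. intros x y E; discriminate. }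
  set (z := exist (fun b => pinj b /\ rank_le n b) _ Hz : Iln X n).
  assert (K : forall a, h a = h z).
  { intro a. destruct (decomp X f Hf n a) as [U [W [H1 H2]]].
    apply (@core S mulS sigma HS HSc (fun j => h (U j)) (fun j => h (W j))).
    - intro j. rewrite <- Hhom, H1. reflexivity.
    - intros j k Hjk. rewrite <- Hhom. f_equal. apply Iln_ext. simpl. apply H2. exact Hjk. }
  intros a b. rewrite (K a), (K b). reflexivity.
Qed.
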